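(* Let $n\geq3$ and let $\sigma:\mathbb{R}\to\mathbb{R}$ be an increasing odd homeomorphism. Let $x=(x_1,\dots,x_n)\in\mathbb{R}^n$ and suppose there exist $i<j$ in $\{1,\dots,n\}$ such that $x_ix_j<0$ and $(x_i,x_j)$ is $\sigma$-irrational in $\mathbb{R}^2$. Then the orbit $\mathcal M(\sigma,n)x=\{m(x):m\in\mathcal M(\sigma,n)\}$ is dense in $\mathbb{R}^n$.
   Context: For $1\leq i<j\leq n$ define $h_{i,j},v_{i,j}:\mathbb{R}^n\to\mathbb{R}^n$ by $h_{i,j}(x)=x+\sigma^{-1}(x_j)e_i$ and $v_{i,j}(x)=x+\sigma(x_i)e_j$ (only the $i$-th, resp. $j$-th, coordinate changes), where $(e_k)$ is the standard basis. $\mathcal M(\sigma,n)$ is the monoid generated by all $h_{i,j},v_{i,j}$, $1\le i<j\le n$. In $\mathbb{R}^2$, with $h_\sigma(x,y)=(x+\sigma^{-1}(y),y)$, $v_\sigma(x,y)=(x,\sigma(x)+y)$, the $\sigma$-rational lines are: the axes $Ox=\mathbb{R}\times\{0\}$, $Oy=\{0\}\times\mathbb{R}$; the sets $m(Ox)$ with $m$ in the monoid generated by $h_\sigma,v_\sigma$; and the sets $m(Oy)$ with $m$ in the monoid generated by $h_\sigma^{-1},v_\sigma^{-1}$. A point of $\mathbb{R}^2$ is $\sigma$-irrational if it lies on no $\sigma$-rational line. *)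

(* Defs.v *)
(* concrete reals R. Vectors of R^n are functions nat -> R,
   only coordinates 0..n-1 being relevant (indices are 0-based). *)
From Stdlib Require Import Reals Lra Arith.
Open Scope R_scope.

Inductive gen_monoid {T : Type} (G : (T -> T) -> Prop) : (T -> T) -> Prop :=
| gm_id : gen_monoid G (fun p => p)
| gm_comp : forall g m, G g -> gen_monoid G m -> gen_monoid G (fun p => g (m p)).

Definition incr_odd_homeo (sigma sigma_inv : R -> R) : Prop :=
  (forall a b, a < b -> sigma a < sigma b) /\
  (forall a, sigma (- a) = - sigma a) /\
  (forall a, continuity_pt sigma a) /\
  (forall a, continuity_pt sigma_inv a) /\
  (forall a, sigma (sigma_inv a) = a) /\
  (forall a, sigma_inv (sigma a) = a).

Definition hmap (sigma_inv : R -> R) (i j : nat) (x : nat -> R) : nat -> R :=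
  fun k => if Nat.eqb k i then x i + sigma_inv (x j) else x k.
Definition vmap (sigma : R -> R) (i j : nat) (x : nat -> R) : nat -> R :=
  fun k => if Nat.eqb k j then x j + sigma (x i) else x k.

Definition M_gen (sigma sigma_inv : R -> R) (n : nat) (f : (nat -> R) -> (nat -> R)) : Prop :=
  exists i j, (i < j < n)%nat /\ (f = hmap sigma_inv i j \/ f = vmap sigma i j).

Definition M_sigma (sigma sigma_inv : R -> R) (n : nat) := gen_monoid (M_gen sigma sigma_inv n).

Definition h2 (sigma_inv : R -> R) (p : R * R) : R * R := (fst p + sigma_inv (snd p), snd p).
Definition v2 (sigma : R -> R) (p : R * R) : R * R := (fst p, sigma (fst p) + snd p).
Definition h2inv (sigma_inv : R -> R) (p : R * R) : R * R := (fst p - sigma_inv (snd p), snd p).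
Definition v2inv (sigma : R -> R) (p : R * R) : R * R := (fst p, snd p - sigma (fst p)).

Definition Mplus (sigma sigma_inv : R -> R) :=
  gen_monoid (fun f => f = h2 sigma_inv \/ f = v2 sigma).
Definition Mminus (sigma sigma_inv : R -> R) :=
  gen_monoid (fun f => f = h2inv sigma_inv \/ f = v2inv sigma).

Definition Ox : R * R -> Prop := fun p => snd p = 0.
Definition Oy : R * R -> Prop := fun p => fst p = 0.

Definition image2 (m : R * R -> R * R) (A : R * R -> Prop) : R * R -> Prop :=
  fun q => exists p, A p /\ m p = q.

Definition sigma_rational_line (sigma sigma_inv : R -> R) (L : R * R -> Prop) : Prop :=
  L = Ox \/ L = Oy \/
  (exists m, Mplus sigma sigma_inv m /\ L = image2 m Ox) \/
  (exists m, Mminus sigma sigma_inv m /\ L = image2 m Oy).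

Definition sigma_irrational (sigma sigma_inv : R -> R) (p : R * R) : Prop :=
  ~ exists L, sigma_rational_line sigma sigma_inv L /\ L p.

Definition orbit_dense (sigma sigma_inv : R -> R) (n : nat) (x : nat -> R) : Prop :=
  forall (y : nat -> R) (eps : R), 0 < eps ->
    exists m, M_sigma sigma sigma_inv n m /\
      forall k, (k < n)%nat -> Rabs (m x k - y k) < eps.

(* Main.v *)
Require Import Defs.
From Stdlib Require Import Reals Lra Lia Arith ZArith Classical.
Open Scope R_scope.

Lemma cont_ex f x : continuity_pt f x -> forall eps, 0 < eps ->
  exists d, 0 < d /\ forall y, Rabs (y - x) < d -> Rabs (f y - f x) < eps.
Proof.
intros Hc eps He.
destruct (Hc eps He) as [d [Hd Hf]].
exists d; split; auto. intros y Hy.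
destruct (Req_dec y x) as [->|Hne]. rewrite Rminus_diag, Rabs_R0; lra.
apply Hf. split. split. exact I. auto. exact Hy.
Qed.

Lemma gm_trans {T} (G : (T -> T) -> Prop) m1 m2 :
  gen_monoid G m1 -> gen_monoid G m2 -> gen_monoid G (fun p => m2 (m1 p)).
Proof.
intros H1 H2; induction H2.
- exact H1.
- exact (gm_comp G g (fun p => m (m1 p)) H IHgen_monoid).
Qed.

Lemma floor_ex r : 0 <= r -> exists N : nat, INR N <= r < INR N + 1.
Proof.
intros Hr. destruct (archimed r) as [H1 H2].
assert (Hz : (0 < up r)%Z). { apply lt_IZR. lra. }
exists (Z.to_nat (up r - 1)).
rewrite INR_IZR_INZ, Z2Nat.id by lia. rewrite minus_IZR. simpl. lra.
Qed.

Lemma big_nat r : exists N : nat, r < INR N.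
Proof.
destruct (Rle_or_lt 0 r) as [Hr|Hr].
- destruct (floor_ex r Hr) as [N HN]. exists (S N). rewrite S_INR. lra.
- exists O. simpl. lra.
Qed.

Definition good (f : R -> R) :=
  (forall a b, a < b -> f a < f b) /\ (forall a, f (- a) = - f a) /\
  (forall a, continuity_pt f a).

Section G.
Variable f : R -> R.
Hypothesis Hf : good f.

Lemma g_incr a b : a < b -> f a < f b. Proof. apply Hf. Qed.
Lemma g_odd a : f (- a) = - f a. Proof. apply Hf. Qed.
Lemma g_le a b : a <= b -> f a <= f b.
Proof. intros [H|H]. left; apply g_incr; auto. subst; lra. Qed.
Lemma g_0 : f 0 = 0.
Proof. pose proof (g_odd 0). rewrite Ropp_0 in H. lra. Qed.
Lemma g_pos a : 0 < a -> 0 < f a.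
Proof. intros; rewrite <- g_0; apply g_incr; auto. Qed.
Lemma g_neg a : a < 0 -> f a < 0.
Proof. intros; rewrite <- g_0; apply g_incr; auto. Qed.
Lemma g_abs a : Rabs (f a) = f (Rabs a).
Proof.
destruct (Rle_or_lt 0 a).
- rewrite (Rabs_right a) by lra. apply Rabs_right. apply Rle_ge.
  rewrite <- g_0. apply g_le; auto.
- rewrite (Rabs_left a) by lra. rewrite g_odd. apply Rabs_left. apply g_neg; auto.
Qed.
Lemma g_nz a : a <> 0 -> f a <> 0.
Proof.
intros H. destruct (Rlt_or_le a 0). apply g_neg in H0; lra.
assert (0 < a) by lra. apply g_pos in H1; lra.
Qed.
End G.

Section S.
Variables (sg si : R -> R) (n : nat).
Hypothesis Hs : incr_odd_homeo sg si.

Lemma sg_si a : sg (si a) = a. Proof. apply Hs. Qed.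
Lemma si_sg a : si (sg a) = a. Proof. apply Hs. Qed.

Lemma good_sg : good sg.
Proof. destruct Hs as [A [B [C _]]]. split; auto. Qed.

Lemma good_si : good si.
Proof.
destruct Hs as [A [B [C [D [E F]]]]].
split; [|split].
- intros a b Hab. destruct (Rlt_or_le (si a) (si b)); auto.
  assert (sg (si b) <= sg (si a)) by (apply (g_le sg good_sg); auto).
  rewrite !E in H0. lra.
- intros a. rewrite <- (F (- si a)), B, E. reflexivity.
- auto.
Qed.

Definition Fm (p q : nat) : R -> R := if Nat.ltb p q then si else sg.

Lemma good_Fm p q : good (Fm p q).
Proof. unfold Fm; destruct (Nat.ltb p q). apply good_si. apply good_sg. Qed.

Lemma Fm_inv p q a : p <> q -> Fm p q (Fm q p a) = a.
Proof.
intros H. unfold Fm. destruct (Nat.ltb_spec p q); destruct (Nat.ltb_spec q p); try lia.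
apply si_sg. apply sg_si.
Qed.

Definition tiny d := Rmin d (Rmin (sg d) (si d)).

Lemma tiny_pos d : 0 < d -> 0 < tiny d.
Proof.
intros. unfold tiny. apply Rmin_glb_lt; auto. apply Rmin_glb_lt.
apply (g_pos _ good_sg); auto. apply (g_pos _ good_si); auto.
Qed.

Lemma tiny_le d : tiny d <= d.
Proof. apply Rmin_l. Qed.

Lemma tiny_F p q d x : 0 < d -> Rabs x < tiny d -> Rabs (Fm p q x) < d.
Proof.
intros Hd Hx. rewrite (g_abs _ (good_Fm p q)). unfold Fm, tiny in *.
destruct (Nat.ltb p q).
- rewrite <- (si_sg d). apply (g_incr _ good_si).
  eapply Rlt_le_trans. exact Hx. eapply Rle_trans. apply Rmin_r. apply Rmin_l.
- rewrite <- (sg_si d). apply (g_incr _ good_sg).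
  eapply Rlt_le_trans. exact Hx. eapply Rle_trans. apply Rmin_r. apply Rmin_r.
Qed.

Lemma tiny_sg d x : 0 < d -> Rabs x < tiny d -> sg (Rabs x) < d.
Proof.
intros Hd Hx. rewrite <- (sg_si d). apply (g_incr _ good_sg). unfold tiny in Hx.
eapply Rlt_le_trans. exact Hx. eapply Rle_trans. apply Rmin_r. apply Rmin_r.
Qed.
Lemma tiny_si d x : 0 < d -> Rabs x < tiny d -> si (Rabs x) < d.
Proof.
intros Hd Hx. rewrite <- (si_sg d). apply (g_incr _ good_si). unfold tiny in Hx.
eapply Rlt_le_trans. exact Hx. eapply Rle_trans. apply Rmin_r. apply Rmin_l.
Qed.

Definition add (p q : nat) : (nat -> R) -> (nat -> R) :=
  if Nat.ltb p q then hmap si p q else vmap sg q p.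

Lemma add_spec p q s k :
  add p q s k = if Nat.eqb k p then s p + Fm p q (s q) else s k.
Proof. unfold add, Fm, hmap, vmap. destruct (Nat.ltb p q); reflexivity. Qed.

Lemma add_gen p q : p <> q -> (p < n)%nat -> (q < n)%nat -> M_gen sg si n (add p q).
Proof.
intros H1 H2 H3. unfold add. destruct (Nat.ltb_spec p q).
- exists p, q. split. lia. left; reflexivity.
- exists q, p. split. lia. right; reflexivity.
Qed.

Lemma gen_add g : M_gen sg si n g ->
  exists p q, p <> q /\ (p < n)%nat /\ (q < n)%nat /\ g = add p q.
Proof.
intros [i [j [Hij [-> | ->]]]].
- exists i, j. split. lia. split. lia. split. lia.
  unfold add. destruct (Nat.ltb_spec i j). reflexivity. lia.
- exists j, i. split. lia. split. lia. split. lia.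
  unfold add. destruct (Nat.ltb_spec j i). lia. reflexivity.
Qed.

Definition MS := M_sigma sg si n.

Definition Reach (u w : nat -> R) := exists m, MS m /\ m u = w.

Lemma Reach_refl u : Reach u u.
Proof. exists (fun p => p). split. constructor. reflexivity. Qed.

Lemma Reach_trans u v w : Reach u v -> Reach v w -> Reach u w.
Proof.
intros [m1 [H1 E1]] [m2 [H2 E2]]. exists (fun p => m2 (m1 p)). split.
apply gm_trans; auto. subst; reflexivity.
Qed.

Lemma MS_add p q : p <> q -> (p < n)%nat -> (q < n)%nat -> MS (add p q).
Proof.
intros. apply (gm_comp _ (add p q) (fun p => p)). apply add_gen; auto. constructor.
Qed.

Lemma Reach_M m u : MS m -> Reach u (m u).
Proof. intros; exists m; auto. Qed.

Lemma Reach_add p q u : p <> q -> (p < n)%nat -> (q < n)%nat -> Reach u (add p q u).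
Proof. intros; apply Reach_M, MS_add; auto. Qed.

Definition iadd p q (m : nat) (s : nat -> R) := Nat.iter m (add p q) s.

Lemma iadd_spec p q m s k : p <> q ->
  iadd p q m s k = if Nat.eqb k p then s p + INR m * Fm p q (s q) else s k.
Proof.
intros Hpq. revert k. induction m as [|m IH]; intros k.
- simpl. destruct (Nat.eqb_spec k p). subst; ring. reflexivity.
- change (iadd p q (S m) s) with (add p q (iadd p q m s)).
  rewrite add_spec. unfold iadd in IH |- *.
  rewrite (IH p), (IH q), (IH k). rewrite Nat.eqb_refl.
  destruct (Nat.eqb_spec q p); [lia|].
  destruct (Nat.eqb k p). rewrite S_INR. ring. reflexivity.
Qed.

Lemma MS_iadd p q m : p <> q -> (p < n)%nat -> (q < n)%nat -> MS (iadd p q m).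
Proof.
intros. induction m as [|m IH].
- constructor.
- apply (gm_comp _ (add p q) (iadd p q m)). apply add_gen; auto. auto.
Qed.

Definition close (d : R) (u w : nat -> R) := forall k, (k < n)%nat -> Rabs (u k - w k) < d.

Lemma add_cont p q : p <> q -> (p < n)%nat -> (q < n)%nat ->
  forall z eta, 0 < eta -> exists d, 0 < d /\ forall u, close d u z -> close eta (add p q u) (add p q z).
Proof.
intros Hpq Hp Hq z eta He.
destruct (cont_ex _ (z q) (proj2 (proj2 (good_Fm p q)) (z q)) (eta/2)) as [d1 [Hd1 Hc]]. lra.
exists (Rmin (eta/2) d1). split. apply Rmin_glb_lt; lra.
intros u Hu k Hk. rewrite !add_spec.
assert (Hu' : forall l, (l < n)%nat -> Rabs (u l - z l) < eta/2 /\ Rabs (u l - z l) < d1).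
{ intros l Hl. specialize (Hu l Hl). split; eapply Rlt_le_trans; eauto. apply Rmin_l. apply Rmin_r. }
destruct (Nat.eqb k p).
- destruct (Hu' p Hp) as [A _]. destruct (Hu' q Hq) as [_ B].
  specialize (Hc _ B).
  replace (u p + Fm p q (u q) - (z p + Fm p q (z q))) with ((u p - z p) + (Fm p q (u q) - Fm p q (z q))) by ring.
  eapply Rle_lt_trans. apply Rabs_triang. lra.
- destruct (Hu' k Hk). lra.
Qed.

Lemma MS_cont m : MS m -> forall z eta, 0 < eta ->
  exists d, 0 < d /\ forall u, close d u z -> close eta (m u) (m z).
Proof.
intros Hm. induction Hm as [|g m Hg Hm IH]; intros z eta He.
- exists eta. split; auto.
- destruct (gen_add g Hg) as [p [q [Hpq [Hp [Hq ->]]]]].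
  destruct (add_cont p q Hpq Hp Hq (m z) eta He) as [d1 [Hd1 H1]].
  destruct (IH z d1 Hd1) as [d [Hd H2]].
  exists d. split; auto.
Qed.

Lemma FA s l t w : l <> t -> (l < n)%nat -> (t < n)%nat -> s t <> 0 ->
  0 <= (w - s l) * s t ->
  exists s', Reach s s' /\ Rabs (s' l - w) < Rabs (Fm l t (s t)) /\
     forall k, k <> l -> s' k = s k.
Proof.
intros Hlt Hl Ht Hst Hw.
set (f := Fm l t (s t)).
assert (Hfs : 0 < f * s t).
{ destruct (Rlt_or_le (s t) 0).
  - assert (f < 0) by (apply (g_neg _ (good_Fm l t)); auto). nra.
  - assert (0 < s t) by lra. assert (0 < f) by (apply (g_pos _ (good_Fm l t)); auto). nra. }
assert (Hf0 : f <> 0) by (intro E; rewrite E in Hfs; lra).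
set (r := (w - s l) / f).
assert (Hr : 0 <= r).
{ unfold r. destruct (Rlt_or_le (s t) 0).
  - assert (f < 0) by nra. assert (w - s l <= 0) by nra.
    replace ((w - s l) / f) with ((- (w - s l)) / (- f)) by (field; auto).
    apply Rmult_le_pos. lra. left. apply Rinv_0_lt_compat. lra.
  - assert (0 < f) by nra. assert (0 < s t) by lra. assert (0 <= w - s l) by nra.
    apply Rmult_le_pos. lra. left. apply Rinv_0_lt_compat. lra. }
destruct (floor_ex r Hr) as [N HN].
exists (iadd l t N s). split. apply Reach_M, MS_iadd; auto. split.
- rewrite iadd_spec by auto. rewrite Nat.eqb_refl. fold f.
  replace (s l + INR N * f - w) with ((INR N - r) * f) by (unfold r; field; auto).
  rewrite Rabs_mult. rewrite <- (Rmult_1_l (Rabs f)) at 2.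
  apply Rmult_lt_compat_r. apply Rabs_pos_lt; auto.
  rewrite Rabs_left1 by lra. lra.
- intros k Hk. rewrite iadd_spec by auto. destruct (Nat.eqb_spec k l). lia. reflexivity.
Qed.

Lemma TT s l u t w d : l <> t -> l <> u -> (l < n)%nat -> (t < n)%nat -> (u < n)%nat ->
  s u * s t < 0 -> Rabs (Fm l u (s u)) < d -> Rabs (Fm l t (s t)) < d ->
  exists s', Reach s s' /\ Rabs (s' l - w) < d /\ forall k, k <> l -> s' k = s k.
Proof.
intros Hlt Hlu Hl Ht Hu Hut Hdu Hdt.
assert (s u <> 0) by (intro E; rewrite E in Hut; lra).
assert (s t <> 0) by (intro E; rewrite E in Hut; lra).
destruct (Rle_or_lt 0 ((w - s l) * s u)).
- destruct (FA s l u w) as [s' [A [B C]]]; auto. exists s'; split; auto. split; auto. lra.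
- destruct (FA s l t w) as [s' [A [B C]]]; auto.
  + assert (0 < (w - s l) * s u * (s u * s t) ) by nra.
    assert (0 < s u * s u) by nra.
    assert (0 < (w - s l) * s t * (s u * s u)) by nra.
    nra.
  + exists s'; split; auto. split; auto. lra.
Qed.

Lemma descend (P Q : (nat -> R) -> Prop) (phi : (nat -> R) -> R) (c : R) :
  0 < c -> (forall s, P s -> 0 <= phi s) ->
  (forall s, P s -> ~ Q s -> exists s', Reach s s' /\ P s' /\ phi s' <= phi s - c) ->
  forall s, P s -> exists s', Reach s s' /\ P s' /\ Q s'.
Proof.
intros Hc Hnn Hstep.
assert (K : forall N : nat, forall s, P s -> phi s <= INR N * c ->
   exists s', Reach s s' /\ P s' /\ Q s').
{ induction N as [|N IH]; intros s Ps Hphi.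
  - destruct (classic (Q s)). exists s; split; auto using Reach_refl.
    destruct (Hstep s Ps H) as [s' [_ [Ps' Hs']]]. specialize (Hnn s' Ps').
    simpl in Hphi. lra.
  - destruct (classic (Q s)). exists s; split; auto using Reach_refl.
    destruct (Hstep s Ps H) as [s' [R1 [Ps' Hs']]].
    destruct (IH s' Ps') as [s'' [R2 [P2 Q2]]].
    rewrite S_INR in Hphi. lra.
    exists s''. split; auto. eapply Reach_trans; eauto. }
intros s Ps. destruct (big_nat (phi s / c)) as [N HN].
apply (K N s Ps).
assert (phi s / c * c = phi s) by (field; lra).
assert (phi s / c * c <= INR N * c) by (apply Rmult_le_compat_r; lra). lra.
Qed.

Section E.
Variables (x : nat -> R) (i j : nat).
Hypothesis Hij : (i < j < n)%nat.
Hypothesis Hirr : sigma_irrational sg si (x i, x j).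

Definition Inv (s : nat -> R) := Reach x s /\ s i * s j < 0 /\
  exists g, Mminus sg si g /\ g (s i, s j) = (x i, x j).

Lemma Reach_h s : Reach s (hmap si i j s).
Proof.
exists (fun p => hmap si i j ((fun p => p) p)). split; [|reflexivity].
apply gm_comp; [|constructor]. exists i, j. split; auto.
Qed.

Lemma Reach_v s : Reach s (vmap sg i j s).
Proof.
exists (fun p => vmap sg i j ((fun p => p) p)). split; [|reflexivity].
apply gm_comp; [|constructor]. exists i, j. split; auto.
Qed.

Lemma SH s : Inv s -> si (Rabs (s j)) <= Rabs (s i) ->
  Inv (hmap si i j s) /\ Rabs (hmap si i j s i) = Rabs (s i) - si (Rabs (s j)) /\
  hmap si i j s j = s j.
Proof.
intros [R0 [Hab [g [Hg Hgx]]]] Hle.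
assert (hi : hmap si i j s i = s i + si (s j)) by (unfold hmap; rewrite Nat.eqb_refl; auto).
assert (hj : hmap si i j s j = s j) by (unfold hmap; destruct (Nat.eqb_spec j i); [lia|auto]).
rewrite hi, hj.
set (g' := fun p => g (h2inv si p)).
assert (Hg' : Mminus sg si g').
{ exact (gm_trans _ (fun p => h2inv si ((fun p => p) p)) g
     (gm_comp _ (h2inv si) (fun p => p) (or_introl eq_refl) (gm_id _)) Hg). }
assert (Hg'x : g' (s i + si (s j), s j) = (x i, x j)).
{ unfold g', h2inv; simpl. replace (s i + si (s j) - si (s j)) with (s i) by ring. auto. }
assert (Hnz : s i + si (s j) <> 0).
{ intro E. apply Hirr. exists (image2 g' Oy). split.
  - right; right; right. exists g'; split; auto.
  - exists (s i + si (s j), s j). split; [unfold Oy; simpl; auto | auto]. }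
set (a := s i) in *. set (b := s j) in *.
assert (Hsi := good_si).
destruct (Rlt_or_le 0 a).
- assert (b < 0) by nra.
  assert (E : si b = - si (Rabs b)).
  { rewrite Rabs_left by auto. rewrite (g_odd _ Hsi). ring. }
  rewrite (Rabs_right a) in Hle by lra.
  assert (0 <= a + si b) by (rewrite E; lra).
  assert (0 < a + si b) by (destruct H1; [auto | exfalso; apply Hnz; auto]).
  split; [|split; auto].
  + split. eapply Reach_trans; eauto. apply Reach_h. split. nra. exists g'; split; [auto | rewrite hi, hj; exact Hg'x].
  + rewrite (Rabs_right (a + si b)) by lra. rewrite (Rabs_right a) by lra. rewrite E; ring.
- assert (a < 0) by (destruct H as [H|H]; auto; rewrite H in Hab; lra).
  assert (0 < b) by nra.
  rewrite (Rabs_right b) in Hle |- * by lra. rewrite Rabs_left in Hle by lra.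
  assert (a + si b <= 0) by lra.
  assert (a + si b < 0) by (destruct H2; [auto | exfalso; apply Hnz; auto]).
  split; [|split; auto].
  + split. eapply Reach_trans; eauto. apply Reach_h. split. nra. exists g'; split; [auto | rewrite hi, hj; exact Hg'x].
  + rewrite (Rabs_left (a + si b)) by lra. rewrite (Rabs_left a) by lra. ring.
Qed.

Lemma SV s : Inv s -> sg (Rabs (s i)) < Rabs (s j) ->
  Inv (vmap sg i j s) /\ Rabs (vmap sg i j s j) = Rabs (s j) - sg (Rabs (s i)) /\
  vmap sg i j s i = s i.
Proof.
intros [R0 [Hab [g [Hg Hgx]]]] Hlt.
assert (hj : vmap sg i j s j = s j + sg (s i)) by (unfold vmap; rewrite Nat.eqb_refl; auto).
assert (hi : vmap sg i j s i = s i) by (unfold vmap; destruct (Nat.eqb_spec i j); [lia|auto]).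
rewrite hi, hj.
set (g' := fun p => g (v2inv sg p)).
assert (Hg' : Mminus sg si g').
{ exact (gm_trans _ (fun p => v2inv sg ((fun p => p) p)) g
     (gm_comp _ (v2inv sg) (fun p => p) (or_intror eq_refl) (gm_id _)) Hg). }
assert (Hg'x : g' (s i, s j + sg (s i)) = (x i, x j)).
{ unfold g', v2inv; simpl. replace (s j + sg (s i) - sg (s i)) with (s j) by ring. auto. }
set (a := s i) in *. set (b := s j) in *.
assert (Hsg := good_sg).
destruct (Rlt_or_le 0 a).
- assert (b < 0) by nra.
  rewrite (Rabs_right a) in Hlt |- * by lra. rewrite Rabs_left in Hlt by lra.
  assert (b + sg a < 0) by lra.
  split; [|split; auto].
  + split. eapply Reach_trans; eauto. apply Reach_v. split. nra. exists g'; split; [auto | rewrite hi, hj; exact Hg'x].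
  + rewrite !Rabs_left by lra. ring.
- assert (a < 0) by (destruct H as [H|H]; auto; rewrite H in Hab; lra).
  assert (0 < b) by nra.
  assert (E : sg a = - sg (Rabs a)).
  { rewrite Rabs_left by auto. rewrite (g_odd _ Hsg). ring. }
  rewrite (Rabs_right b) in Hlt |- * by lra.
  assert (0 < b + sg a) by (rewrite E; lra).
  split; [|split; auto].
  + split. eapply Reach_trans; eauto. apply Reach_v. split. nra. exists g'; split; [auto | rewrite hi, hj; exact Hg'x].
  + rewrite E, !Rabs_right by lra. ring.
Qed.

Lemma euclid tau : 0 < tau -> x i * x j < 0 ->
  exists s, Reach x s /\ s i * s j < 0 /\ Rabs (s i) < tau /\ Rabs (s j) < tau.
Proof.
intros Ht Hx.
set (d := tiny tau).
assert (Hd : 0 < d) by (apply tiny_pos; auto).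
assert (Hsg := good_sg). assert (Hsi := good_si).
assert (I0 : Inv x).
{ split. apply Reach_refl. split; auto. exists (fun p => p). split. constructor. auto. }
destruct (descend Inv (fun s => Rabs (s i) < d \/ Rabs (s j) < d)
   (fun s => Rabs (s i) + Rabs (s j)) (Rmin (si d) (sg d))) with (s := x)
   as [s1 [R1 [I1 Q1]]]; auto.
{ apply Rmin_glb_lt; apply g_pos; auto. }
{ intros s _. pose proof (Rabs_pos (s i)); pose proof (Rabs_pos (s j)); lra. }
{ intros s Is NQ.
  assert (A1 : d <= Rabs (s i)) by (apply Rnot_lt_le; tauto).
  assert (A2 : d <= Rabs (s j)) by (apply Rnot_lt_le; tauto).
  destruct (Rle_or_lt (si (Rabs (s j))) (Rabs (s i))).
  - destruct (SH s Is H) as [I' [E1 E2]].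
    exists (hmap si i j s). split. apply Reach_h. split; auto.
    rewrite E1, E2. assert (si d <= si (Rabs (s j))) by (apply g_le; auto).
    pose proof (Rmin_l (si d) (sg d)). lra.
  - assert (sg (Rabs (s i)) < Rabs (s j)).
    { rewrite <- (sg_si (Rabs (s j))). apply g_incr; auto. }
    destruct (SV s Is H0) as [I' [E1 E2]].
    exists (vmap sg i j s). split. apply Reach_v. split; auto.
    rewrite E1, E2. assert (sg d <= sg (Rabs (s i))) by (apply g_le; auto).
    pose proof (Rmin_r (si d) (sg d)). lra. }
destruct Q1 as [Q1|Q1].
-
  set (a0 := s1 i).
  assert (Ha0 : 0 < Rabs a0).
  { apply Rabs_pos_lt. intro E. destruct I1 as [_ [H _]]. unfold a0 in E. rewrite E in H. lra. }
  destruct (descend (fun s => Inv s /\ s i = a0) (fun s => Rabs (s j) <= sg (Rabs a0))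
     (fun s => Rabs (s j)) (sg (Rabs a0))) with (s := s1) as [s2 [R2 [[I2 E2] Q2]]]; auto.
  { apply g_pos; auto. }
  { intros; apply Rabs_pos. }
  { intros s [Is Es] NQ. apply Rnot_le_lt in NQ. rewrite <- Es in NQ.
    destruct (SV s Is NQ) as [I' [E1 E3]].
    exists (vmap sg i j s). split. apply Reach_v. split; [split; auto; rewrite E3; auto|].
    rewrite E1, Es. lra. }
  exists s2. split. eapply Reach_trans; eauto. split. apply I2. rewrite E2. split.
  + pose proof (tiny_le tau). fold d in H. unfold a0 in *. lra.
  + eapply Rle_lt_trans. exact Q2. apply tiny_sg; auto.
- set (b0 := s1 j).
  assert (Hb0 : 0 < Rabs b0).
  { apply Rabs_pos_lt. intro E. destruct I1 as [_ [H _]]. unfold b0 in E. rewrite E in H. lra. }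
  destruct (descend (fun s => Inv s /\ s j = b0) (fun s => Rabs (s i) < si (Rabs b0))
     (fun s => Rabs (s i)) (si (Rabs b0))) with (s := s1) as [s2 [R2 [[I2 E2] Q2]]]; auto.
  { apply g_pos; auto. }
  { intros; apply Rabs_pos. }
  { intros s [Is Es] NQ. apply Rnot_lt_le in NQ. rewrite <- Es in NQ.
    destruct (SH s Is NQ) as [I' [E1 E3]].
    exists (hmap si i j s). split. apply Reach_h. split; [split; auto; rewrite E3; auto|].
    rewrite E1, Es. lra. }
  exists s2. split. eapply Reach_trans; eauto. split. apply I2. rewrite E2. split.
  + eapply Rlt_trans. exact Q2. apply tiny_si; auto.
  + pose proof (tiny_le tau). fold d in H. unfold b0 in *. lra.
Qed.

End E.

Lemma PC s t u k d w : t <> u -> k <> t -> k <> u -> (t < n)%nat -> (u < n)%nat -> (k < n)%nat ->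
  0 < d -> s t * s u < 0 -> Rabs (s t) < tiny d -> Rabs (s u) < tiny d -> w t = 0 ->
  exists z, Reach s z /\ close d z w.
Proof.
intros Htu Hkt Hku Ht Hu Hk Hd Hst Htt Htu' Hw.
assert (L : forall N, exists s1, Reach s s1 /\ s1 t = s t /\ s1 u = s u /\
   forall l, (l < N)%nat -> (l < n)%nat -> l <> t -> l <> u -> Rabs (s1 l - w l) < d).
{ induction N as [|N IH].
  - exists s. split. apply Reach_refl. split; auto. split; auto. intros; lia.
  - destruct IH as [s1 [R1 [Et [Eu Hl]]]].
    destruct (classic ((N < n)%nat /\ N <> t /\ N <> u)) as [[HN [Ht' Hu']]|HN].
    + destruct (TT s1 N u t (w N) d) as [s2 [R2 [B C]]]; auto.
      { rewrite Eu, Et. nra. }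
      { rewrite Eu. apply tiny_F; auto. }
      { rewrite Et. apply tiny_F; auto. }
      exists s2. split. eapply Reach_trans; eauto.
      rewrite (C t), (C u); auto. split; auto. split; auto.
      intros l Hl1 Hl2 Hl3 Hl4. destruct (Nat.eq_dec l N). subst; auto.
      rewrite C; auto. apply Hl; auto. lia.
    + exists s1. split; auto. split; auto. split; auto.
      intros l Hl1 Hl2 Hl3 Hl4. destruct (Nat.eq_dec l N). subst; tauto.
      apply Hl; auto. lia. }
destruct (L n) as [s1 [R1 [Et [Eu Hl]]]].
set (q := s t) in *. set (p := s u) in *.
assert (Hq : Rabs q < d) by (pose proof (tiny_le d); lra).
assert (Gku := good_Fm k u). assert (Guk := good_Fm u k).
assert (Hinv : Fm u k (Fm k u (w u - p)) = w u - p) by (apply Fm_inv; auto).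
destruct (Rlt_or_le q 0) as [Hq0|Hq0].
- set (c := Rmax (w k) (Fm k u (w u - p)) + d).
  destruct (TT s1 k u t c d) as [s2 [R2 [B2 C2]]]; auto.
  { rewrite Eu, Et. nra. }
  { rewrite Eu. apply tiny_F; auto. }
  { rewrite Et. apply tiny_F; auto. }
  assert (K1 : w k < s2 k).
  { pose proof (Rmax_l (w k) (Fm k u (w u - p))). unfold c in B2.
    destruct (Rabs_def2 _ _ B2). lra. }
  assert (K2 : Fm k u (w u - p) < s2 k).
  { pose proof (Rmax_r (w k) (Fm k u (w u - p))). unfold c in B2.
    destruct (Rabs_def2 _ _ B2). lra. }
  set (s3 := add u k s2).
  assert (E3 : forall l, l <> u -> s3 l = s2 l).
  { intros l Hl'. unfold s3. rewrite add_spec. destruct (Nat.eqb_spec l u). lia. auto. }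
  assert (K3 : w u <= s3 u).
  { unfold s3. rewrite add_spec, Nat.eqb_refl. rewrite C2 by auto. rewrite Eu.
    assert (Fm u k (Fm k u (w u - p)) <= Fm u k (s2 k)) by (apply g_le; auto; lra). lra. }
  assert (Hs3t : s3 t = q) by (rewrite E3, C2; auto).
  destruct (FA s3 u t (w u)) as [s4 [R4 [B4 C4]]]; auto.
  { rewrite Hs3t; lra. }
  { rewrite Hs3t. nra. }
  assert (Hs4t : s4 t = q) by (rewrite C4; auto).
  destruct (FA s4 k t (w k)) as [s5 [R5 [B5 C5]]]; auto.
  { rewrite Hs4t; lra. }
  { rewrite Hs4t, C4, E3 by auto. nra. }
  exists s5. split.
  { eapply Reach_trans. exact R1. eapply Reach_trans. exact R2.
    eapply Reach_trans. apply (Reach_add u k s2); auto.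
    eapply Reach_trans; eauto. }
  intros l Hl'.
  destruct (Nat.eq_dec l k). { subst. rewrite Hs4t in B5. eapply Rlt_trans. exact B5. apply tiny_F; auto. }
  rewrite C5 by auto.
  destruct (Nat.eq_dec l u). { subst. rewrite Hs3t in B4. eapply Rlt_trans. exact B4. apply tiny_F; auto. }
  rewrite C4 by auto. rewrite E3 by auto. rewrite C2 by auto.
  destruct (Nat.eq_dec l t). { subst. rewrite Et, Hw. unfold q in Hq. rewrite Rminus_0_r. auto. }
  apply Hl; auto.
- assert (Hq0' : 0 < q).
  { destruct Hq0; auto. rewrite <- H in Hst. lra. }
  set (c := Rmin (w k) (Fm k u (w u - p)) - d).
  destruct (TT s1 k u t c d) as [s2 [R2 [B2 C2]]]; auto.
  { rewrite Eu, Et. nra. }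
  { rewrite Eu. apply tiny_F; auto. }
  { rewrite Et. apply tiny_F; auto. }
  assert (K1 : s2 k < w k).
  { pose proof (Rmin_l (w k) (Fm k u (w u - p))). unfold c in B2.
    destruct (Rabs_def2 _ _ B2). lra. }
  assert (K2 : s2 k < Fm k u (w u - p)).
  { pose proof (Rmin_r (w k) (Fm k u (w u - p))). unfold c in B2.
    destruct (Rabs_def2 _ _ B2). lra. }
  set (s3 := add u k s2).
  assert (E3 : forall l, l <> u -> s3 l = s2 l).
  { intros l Hl'. unfold s3. rewrite add_spec. destruct (Nat.eqb_spec l u). lia. auto. }
  assert (K3 : s3 u <= w u).
  { unfold s3. rewrite add_spec, Nat.eqb_refl. rewrite C2 by auto. rewrite Eu.
    assert (Fm u k (s2 k) <= Fm u k (Fm k u (w u - p))) by (apply g_le; auto; lra). lra. }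
  assert (Hs3t : s3 t = q) by (rewrite E3, C2; auto).
  destruct (FA s3 u t (w u)) as [s4 [R4 [B4 C4]]]; auto.
  { rewrite Hs3t; lra. }
  { rewrite Hs3t. nra. }
  assert (Hs4t : s4 t = q) by (rewrite C4; auto).
  destruct (FA s4 k t (w k)) as [s5 [R5 [B5 C5]]]; auto.
  { rewrite Hs4t; lra. }
  { rewrite Hs4t, C4, E3 by auto. nra. }
  exists s5. split.
  { eapply Reach_trans. exact R1. eapply Reach_trans. exact R2.
    eapply Reach_trans. apply (Reach_add u k s2); auto.
    eapply Reach_trans; eauto. }
  intros l Hl'.
  destruct (Nat.eq_dec l k). { subst. rewrite Hs4t in B5. eapply Rlt_trans. exact B5. apply tiny_F; auto. }
  rewrite C5 by auto.
  destruct (Nat.eq_dec l u). { subst. rewrite Hs3t in B4. eapply Rlt_trans. exact B4. apply tiny_F; auto. }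
  rewrite C4 by auto. rewrite E3 by auto. rewrite C2 by auto.
  destruct (Nat.eq_dec l t). { subst. rewrite Et, Hw. unfold q in Hq. rewrite Rminus_0_r. auto. }
  apply Hl; auto.
Qed.

Lemma div_pos_prod X Y : 0 < X * Y -> 0 < X / Y.
Proof.
intros H. destruct (Rlt_or_le 0 Y).
- assert (0 < X) by nra. apply Rdiv_lt_0_compat; auto.
- assert (Y < 0) by (destruct H0 as [H0|H0]; auto; rewrite H0 in H; lra). assert (X < 0) by nra.
  replace (X / Y) with ((- X) / (- Y)) by (field; lra). apply Rdiv_lt_0_compat; lra.
Qed.

Lemma CB y a b c eps : a <> b -> a <> c -> b <> c -> (a < n)%nat -> (b < n)%nat -> (c < n)%nat ->
  y b * y c < 0 -> 0 < eps ->
  exists W z, MS W /\ z a = 0 /\ close eps (W z) y.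
Proof.
intros Hab Hac Hbc Ha Hb Hc Hyy He.
assert (Gab := good_Fm a b). assert (Gac := good_Fm a c). assert (Gba := good_Fm b a).
set (al := Fm a b (y b)). set (f := Fm a c (y c)).
assert (Hsg : al * f < 0).
{ destruct (Rlt_or_le 0 (y b)).
  - assert (y c < 0) by nra. assert (0 < al) by (apply g_pos; auto). assert (f < 0) by (apply g_neg; auto). nra.
  - assert (y b < 0) by (destruct H as [H|H]; auto; rewrite H in Hyy; lra). assert (0 < y c) by nra.
    assert (al < 0) by (apply g_neg; auto). assert (0 < f) by (apply g_pos; auto). nra. }
assert (Hal : 0 < Rabs al) by (apply Rabs_pos_lt; intro E; rewrite E in Hsg; lra).
assert (Hf : 0 < Rabs f) by (apply Rabs_pos_lt; intro E; rewrite E in Hsg; lra).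
destruct (cont_ex _ al (proj2 (proj2 Gba) al) eps He) as [dl [Hdl Hcont]].
assert (Hyb : Fm b a al = y b) by (apply Fm_inv; auto).
destruct (big_nat (Rabs f / dl + Rabs (y a) / Rabs al)) as [m Hm].
assert (Hm1 : Rabs f / dl < INR m).
{ assert (0 <= Rabs (y a) / Rabs al) by (apply Rmult_le_pos; [apply Rabs_pos| left; apply Rinv_0_lt_compat; auto]). lra. }
assert (Hm2 : Rabs (y a) / Rabs al < INR m).
{ assert (0 <= Rabs f / dl) by (apply Rmult_le_pos; [apply Rabs_pos| left; apply Rinv_0_lt_compat; auto]). lra. }
assert (Hm0 : 0 < INR m).
{ assert (0 < Rabs f / dl) by (apply Rdiv_lt_0_compat; auto). lra. }
assert (Hma : Rabs (y a) < INR m * Rabs al).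
{ assert (Rabs (y a) / Rabs al * Rabs al = Rabs (y a)) by (field; lra).
  assert (Rabs (y a) / Rabs al * Rabs al < INR m * Rabs al) by (apply Rmult_lt_compat_r; auto). lra. }
assert (Hmf : Rabs f < dl * INR m).
{ assert (Rabs f / dl * dl = Rabs f) by (field; lra).
  assert (Rabs f / dl * dl < INR m * dl) by (apply Rmult_lt_compat_r; auto). lra. }
set (T := (INR m * al - y a) / (- f)).
assert (HT : 0 < T).
{ unfold T. apply div_pos_prod.
  destruct (Rlt_or_le 0 al).
  - assert (f < 0). { destruct (Rlt_or_le f 0); auto. assert (0 <= al * f) by (apply Rmult_le_pos; lra). lra. }
    rewrite (Rabs_right al) in Hma by lra.
    pose proof (Rle_abs (y a)). nra.
  - assert (al < 0) by (destruct H as [H|H]; auto; rewrite H in Hsg; lra).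
    assert (0 < f). { destruct (Rlt_or_le 0 f); auto. assert (0 <= al * f) by (replace (al * f) with ((- al) * (- f)) by ring; apply Rmult_le_pos; lra). lra. }
    rewrite (Rabs_left al) in Hma by lra. pose proof (Rle_abs (- y a)). rewrite Rabs_Ropp in H2. nra. }
destruct (floor_ex T (Rlt_le _ _ HT)) as [r Hr].
assert (Hf0 : f <> 0) by (intro E; rewrite E in Hsg; lra).
set (v := (y a - INR r * f) / INR m).
assert (Hv : v - al = f * (T - INR r) / INR m).
{ unfold v, T. field. split; lra. }
assert (Hvd : Rabs (v - al) < dl).
{ rewrite Hv. unfold Rdiv. rewrite !Rabs_mult. rewrite (Rabs_right (T - INR r)) by lra.
  rewrite (Rabs_right (/ INR m)) by (left; apply Rinv_0_lt_compat; auto).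
  assert (Hi : 0 < / INR m) by (apply Rinv_0_lt_compat; auto).
  assert (Rabs f * / INR m < dl).
  { apply (Rmult_lt_reg_r (INR m)); auto. rewrite Rmult_assoc, Rinv_l by lra. lra. }
  assert (Rabs f * (T - INR r) * / INR m <= Rabs f * / INR m).
  { assert (0 < Rabs f * / INR m) by (apply Rmult_lt_0_compat; auto). nra. }
  lra. }
set (be := Fm b a v).
assert (Hbe : Rabs (be - y b) < eps) by (rewrite <- Hyb; apply Hcont; auto).
set (z := fun l => if Nat.eqb l a then 0 else if Nat.eqb l b then be else y l).
exists (fun s => iadd a c r (iadd a b m s)), z.
split. { apply (gm_trans _ (iadd a b m) (iadd a c r)); apply MS_iadd; auto. }
split. { unfold z. rewrite Nat.eqb_refl. auto. }
assert (Z1 : forall l, l <> a -> iadd a b m z l = z l).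
{ intros l Hl. rewrite iadd_spec by auto. destruct (Nat.eqb_spec l a); [lia|auto]. }
assert (Z2 : iadd a b m z a = INR m * v).
{ rewrite iadd_spec by auto. rewrite Nat.eqb_refl. unfold z at 1 2.
  rewrite Nat.eqb_refl. destruct (Nat.eqb_spec b a); [lia|]. rewrite Nat.eqb_refl.
  unfold be. rewrite Fm_inv by auto. ring. }
intros l Hl. rewrite iadd_spec by auto.
destruct (Nat.eqb_spec l a).
- subst l. rewrite Z2, Z1 by auto. unfold z. destruct (Nat.eqb_spec c a); [lia|].
  destruct (Nat.eqb_spec c b); [lia|]. fold f.
  replace (INR m * v + INR r * f - y a) with 0 by (unfold v; field; lra).
  rewrite Rabs_R0; auto.
- rewrite Z1 by auto. unfold z. destruct (Nat.eqb_spec l a); [lia|].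
  destruct (Nat.eqb_spec l b). subst; auto. rewrite Rminus_diag, Rabs_R0; auto.
Qed.

Lemma TL y i j k eps : i <> j -> k <> i -> k <> j -> (i < n)%nat -> (j < n)%nat -> (k < n)%nat ->
  0 < eps -> exists t, (t = i \/ t = j) /\ exists W z, MS W /\ z t = 0 /\ close eps (W z) y.
Proof.
intros Hij Hki Hkj Hi Hj Hk He.
destruct (Req_dec (y j) 0) as [Hy0|Hy0].
{ exists j. split; auto. exists (fun s => s), y. split. constructor. split; auto.
  intros l Hl. rewrite Rminus_diag, Rabs_R0; auto. }
assert (Gkj := good_Fm k j).
set (f := Fm k j (y j)).
assert (Hfs : 0 < f * y j).
{ destruct (Rlt_or_le 0 (y j)).
  - assert (0 < f) by (apply g_pos; auto). nra.
  - assert (y j < 0) by lra. assert (f < 0) by (apply g_neg; auto). nra. }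
assert (Hf : 0 < Rabs f) by (apply Rabs_pos_lt; intro E; rewrite E in Hfs; lra).
destruct (big_nat (Rabs (y k) / Rabs f)) as [r Hr].
assert (Hr' : Rabs (y k) < INR r * Rabs f).
{ assert (Rabs (y k) / Rabs f * Rabs f = Rabs (y k)) by (field; lra).
  assert (Rabs (y k) / Rabs f * Rabs f < INR r * Rabs f) by (apply Rmult_lt_compat_r; auto). lra. }
assert (Hneg : (y k - INR r * f) * y j < 0).
{ pose proof (Rle_abs (y k)). pose proof (Rle_abs (- y k)). rewrite Rabs_Ropp in H0.
  destruct (Rlt_or_le 0 (y j)).
  - assert (0 < f) by (apply g_pos; auto). rewrite (Rabs_right f) in Hr' by lra.
    assert (y k - INR r * f < 0) by lra.
    replace ((y k - INR r * f) * y j) with (- ((INR r * f - y k) * y j)) by ring.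
    assert (0 < (INR r * f - y k) * y j) by (apply Rmult_lt_0_compat; lra). lra.
  - assert (y j < 0) by lra. assert (f < 0) by (apply g_neg; auto). rewrite (Rabs_left f) in Hr' by lra.
    assert (0 < y k - INR r * f) by lra.
    replace ((y k - INR r * f) * y j) with (- ((y k - INR r * f) * (- y j))) by ring.
    assert (0 < (y k - INR r * f) * (- y j)) by (apply Rmult_lt_0_compat; lra). lra. }
set (y' := fun l => if Nat.eqb l k then y k - INR r * f else y l).
assert (HV : forall l, iadd k j r y' l = y l).
{ intros l. rewrite iadd_spec by auto. unfold y'. destruct (Nat.eqb_spec l k).
  - subst l. rewrite Nat.eqb_refl. destruct (Nat.eqb_spec j k); [lia|]. fold f. ring.
  - auto. }
destruct (MS_cont (iadd k j r) (MS_iadd k j r Hkj Hk Hj) y' eps He) as [d [Hd Hc]].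
destruct (CB y' i j k d) as [W [z [HW [Hz Hcl]]]]; auto.
{ unfold y'. destruct (Nat.eqb_spec j k); [lia|]. rewrite Nat.eqb_refl. nra. }
exists i. split; auto. exists (fun s => iadd k j r (W s)), z. split.
{ apply (gm_trans _ W (iadd k j r)); auto. apply MS_iadd; auto. }
split; auto.
intros l Hl. rewrite <- (HV l). apply Hc; auto.
Qed.

Lemma main_lemma x : (3 <= n)%nat ->
  (exists i j, (i < j < n)%nat /\ x i * x j < 0 /\ sigma_irrational sg si (x i, x j)) ->
  orbit_dense sg si n x.
Proof.
intros Hn [i [j [Hij [Hneg Hirr]]]] y eps He.
set (k := if orb (Nat.eqb i 0) (Nat.eqb j 0) then
           (if orb (Nat.eqb i 1) (Nat.eqb j 1) then 2%nat else 1%nat) else 0%nat).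
assert (Hk : (k < n)%nat /\ k <> i /\ k <> j).
{ unfold k. destruct (Nat.eqb_spec i 0), (Nat.eqb_spec j 0), (Nat.eqb_spec i 1), (Nat.eqb_spec j 1);
  simpl; lia. }
destruct Hk as [Hk [Hki Hkj]].
destruct (TL y i j k (eps/2)) as [t [Ht [W [z [HW [Hzt Hc1]]]]]]; try lia; try lra.
destruct (MS_cont W HW z (eps/2)) as [d [Hd Hc2]]; try lra.
destruct (euclid x i j Hij Hirr (tiny d) (tiny_pos d Hd) Hneg) as [s [Rs [Hs1 [Hs2 Hs3]]]].
assert (Hz' : exists z', Reach s z' /\ close d z' z).
{ destruct Ht as [-> | ->].
  - apply (PC s i j k d z); auto; lia.
  - apply (PC s j i k d z); try lia; auto. rewrite Rmult_comm; auto. }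
destruct Hz' as [z' [Rz Hcz]].
destruct (Reach_trans _ _ _ Rs (Reach_trans _ _ _ Rz (Reach_M W z' HW))) as [m [Hm Em]].
exists m. split; auto. intros l Hl. rewrite Em.
specialize (Hc2 z' Hcz l Hl). specialize (Hc1 l Hl).
replace (W z' l - y l) with ((W z' l - W z l) + (W z l - y l)) by ring.
eapply Rle_lt_trans. apply Rabs_triang. lra.
Qed.

End S.

Theorem theorem5 (n : nat) (sigma sigma_inv : R -> R) (x : nat -> R) :
  (3 <= n)%nat ->
  incr_odd_homeo sigma sigma_inv ->
  (exists i j, (i < j < n)%nat /\ x i * x j < 0 /\
     sigma_irrational sigma sigma_inv (x i, x j)) ->
  orbit_dense sigma sigma_inv n x.
Proof.
intros Hn Hs Hex. exact (main_lemma sigma sigma_inv n Hs x Hn Hex).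
Qed.
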